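(* Let $\mathbb Q$ be a probability measure on $(\Omega,\mathcal F)$ equivalent to $\mathbb P$, and let $(\mathcal B_n)_{n\in\mathbb N_0}$ be $\sigma$-subfields. Then $\mathcal B_n\to\mathcal B_0$ weakly under $\mathbb P$ if and only if $\mathcal B_n\to\mathcal B_0$ weakly under $\mathbb Q$.
   Context: Let $(\Omega,\mathcal F,\mathbb P)$ be a (not necessarily complete) probability space and $\mathcal N:=\{F\in\mathcal F:\mathbb P(F)=0\}$. A $\sigma$-subfield is a sub-$\sigma$-field $\mathcal A\subset\mathcal F$ with $\mathcal A=\sigma(\mathcal A\cup\mathcal N)$ (this notion is the same for $\mathbb P$ and any $\mathbb Q\sim\mathbb P$). For a probability measure $\mathbb R\sim\mathbb P$ and a $\sigma$-subfield $\mathcal A$, $\mathbb R_{\mathcal A}f:=\mathbb E^{\mathbb R}[f\mid\mathcal A]$. We say $\mathcal B_n\to\mathcal B_0$ weakly under $\mathbb R$ if $\mathbb R_{\mathcal B_n}\mathbb 1_A\to\mathbb 1_A$ in $\mathbb R$-probability for every $A\in\mathcal B_0$. *)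

(* Defs.v *)
From HB Require Import structures.
From mathcomp Require Import all_boot all_order all_algebra.
From mathcomp Require Import all_classical all_reals all_analysis.
Set Implicit Arguments. Unset Strict Implicit. Unset Printing Implicit Defensive.
Import Order.TTheory GRing.Theory Num.Theory.
Import numFieldNormedType.Exports.
Local Open Scope classical_set_scope.
Local Open Scope ring_scope.

Section Defs.
Context {d : measure_display} {T : measurableType d} {R : realType}.

Definition null_sets (P : probability T R) : set (set T) :=
  [set F | measurable F /\ P F = 0%E].

Definition equiv_prob (P Q : probability T R) : Prop :=
  forall F, measurable F -> (P F = 0%E <-> Q F = 0%E).

Definition sigma_subfield (P : probability T R) (A : set (set T)) : Prop :=
  [/\ sigma_algebra setT A, A `<=` measurable
    & A = <<s A `|` null_sets P >>].

Definition sub_measurable (A : set (set T)) (g : T -> R) : Prop :=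
  forall B : set R, measurable B -> A (g @^-1` B).

Definition cond_exp_version (Q : probability T R) (A : set (set T))
    (f g : T -> R) : Prop :=
  [/\ sub_measurable A g, Q.-integrable setT (EFin \o g)
    & forall B, A B ->
        (\int[Q]_(x in B) (g x)%:E = \int[Q]_(x in B) (f x)%:E)%E].

Definition cvg_in_prob (Q : probability T R) (g : nat -> T -> R) (f : T -> R)
  : Prop :=
  forall eps : R, 0 < eps ->
    (fun n => Q [set x | eps <= `|g n x - f x|]) @ \oo --> 0%E.

Definition weak_cvg_sf (Q : probability T R) (B : nat -> set (set T)) : Prop :=
  forall A, B 0%N A ->
    forall g : nat -> T -> R,
      (forall n, cond_exp_version Q (B n) (\1_A) (g n)) ->
      cvg_in_prob Q g (\1_A).

End Defs.

(* Main.v *)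
From HB Require Import structures.
From mathcomp Require Import all_boot all_order all_algebra.
From mathcomp Require Import all_classical all_reals all_analysis.
From mathcomp Require Import measurable_realfun.
Require Import Defs.
Set Implicit Arguments. Unset Strict Implicit. Unset Printing Implicit Defensive.
Import Order.TTheory GRing.Theory Num.Theory.
Import numFieldNormedType.Exports.
Local Open Scope classical_set_scope.
Local Open Scope ring_scope.
From mathcomp Require Import lra.

Section sub.
Context {d : measure_display} {T : measurableType d} {R : realType}.
Variables (P : probability T R) (G : set (set T)) (HG : G `<=` measurable).
Variables (A : set T) (mA : measurable A).

Lemma sG_meas (C : set T) : <<s G >> C -> measurable C.
Proof. by apply: smallest_sub => //; exact: sigma_algebra_measurable. Qed.

Definition PG : set (g_sigma_algebraType G) -> \bar R := fun C => P C.

Let PG0 : PG set0 = 0%E. Proof. exact: measure0. Qed.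
Let PG_ge0 C : (0 <= PG C)%E. Proof. exact: measure_ge0. Qed.
Let PG_sa : semi_sigma_additive PG.
Proof.
move=> F mF tF mU; apply: (@measure_semi_sigma_additive _ _ _ P) => //.
- by move=> n; exact: sG_meas (mF n).
- exact: sG_meas mU.
Qed.
HB.instance Definition _ := isMeasure.Build _ _ _ PG PG0 PG_ge0 PG_sa.
Let PG_fin : fin_num_fun PG.
Proof. by move=> C mC; rewrite /PG fin_num_measure//; exact: sG_meas. Qed.
HB.instance Definition _ := Measure_isFinite.Build _ _ _ PG PG_fin.

Definition NG : set (g_sigma_algebraType G) -> \bar R := fun C => P (A `&` C).
Let NG0 : NG set0 = 0%E. Proof. by rewrite /NG setI0 measure0. Qed.
Let NG_ge0 C : (0 <= NG C)%E. Proof. exact: measure_ge0. Qed.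
Let NG_sa : semi_sigma_additive NG.
Proof.
move=> F mF tF mU; rewrite /NG setI_bigcupr.
apply: (@measure_semi_sigma_additive _ _ _ P).
- by move=> n; apply: measurableI => //; exact: sG_meas (mF n).
- apply/trivIsetP => i j _ _ ij; rewrite setIACA setIid.
  by move/trivIsetP : tF => /(_ i j I I ij) ->; rewrite setI0.
- by rewrite -setI_bigcupr; apply: measurableI => //; exact: sG_meas mU.
Qed.
HB.instance Definition _ := isMeasure.Build _ _ _ NG NG0 NG_ge0 NG_sa.
Let NG_fin : fin_num_fun NG.
Proof. by move=> C mC; rewrite /NG fin_num_measure//; apply: measurableI => //; exact: sG_meas. Qed.
HB.instance Definition _ := Measure_isFinite.Build _ _ _ NG NG_fin.

Lemma NG_dom : (charge_of_finite_measure NG) `<< PG.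
Proof.
apply/null_content_dominatesP => C mC PC0.
apply/eqP; rewrite eq_le measure_ge0 andbT.
rewrite /= /charge_of_finite_measure /NG -PC0 /PG.
have mC' := sG_meas mC.
apply: le_measure; rewrite ?inE //.
exact: measurableI.
Qed.


Definition idG : T -> g_sigma_algebraType G := id.
Lemma measurable_idG : measurable_fun setT idG.
Proof. by move=> _ B mB; rewrite setTI; exact: sG_meas mB. Qed.

Lemma PG_push : PG = pushforward P idG.
Proof. by apply/funext => C; rewrite /PG /pushforward /idG preimage_id. Qed.

Lemma version_exists : sigma_algebra setT G ->
  exists g, cond_exp_version P G (\1_A) g.
Proof.
move=> sG.
pose f := Radon_Nikodym (charge_of_finite_measure NG) PG.
have ffin x : f x \is a fin_num by apply: Radon_Nikodym_fin_num; exact: NG_dom.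
have fint : (PG).-integrable setT f by apply: Radon_Nikodym_integrable; exact: NG_dom.
have fmeas := measurable_int PG fint.
have fE C : measurable C -> NG C = (\int[PG]_(x in C) f x)%E.
  by move=> mC; rewrite -(Radon_Nikodym_integral NG_dom mC).
exists (fun x => fine (f x)).
have gf : EFin \o (fun x => fine (f x)) = f by apply/funext => x /=; rewrite fineK.
have fmT : measurable_fun [set: T] ((f \o idG) : T -> \bar R).
  exact: measurableT_comp fmeas measurable_idG.
have fintT : P.-integrable setT f.
  apply/integrableP; split; first exact: fmT.
  move/integrableP : fint => [_].
  rewrite PG_push ge0_integral_pushforward//.
  - exact: measurable_idG.
  - exact: measurableT_comp.
split.
- move=> B mB.
  have : measurable_fun (setT : set (g_sigma_algebraType G)) (fun x => fine (f x)).
    by apply/measurable_EFinP; rewrite gf.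
  move=> /(_ measurableT B mB); rewrite setTI /=.
  by rewrite measurable_g_measurableTypeE.
- by rewrite gf.
- move=> B GB.
  rewrite integral_indic; [|exact: HG|exact: mA].
  have -> : (fun x => (fine (f x))%:E) = f by apply/funext => x; rewrite fineK.
  have mB : (G.-sigma).-measurable (B : set (g_sigma_algebraType G)).
    by rewrite measurable_g_measurableTypeE.
  transitivity (\int[PG]_(x in B) f x)%E; last by rewrite -fE.
  rewrite PG_push integral_pushforward//.
  - exact: measurable_idG.
  apply: integrableS fintT => //; exact: HG.
Qed.
End sub.

Section core.
Context {d : measure_display} {T : measurableType d} {R : realType}.
Variables (P : probability T R) (G : set (set T)) (HG : G `<=` measurable)
  (sG : sigma_algebra setT G).
Variables (A : set T) (mA : measurable A) (g : T -> R)
  (gv : cond_exp_version P G (\1_A) g) (C : set T) (GC : G C).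

Lemma subm_T : measurable_fun (setT : set T) g.
Proof. by case: gv => gm _ _ _ B mB; rewrite setTI; apply: HG; exact: gm. Qed.

Lemma subm_G : measurable_fun (setT : set (g_sigma_algebraType G)) g.
Proof.
by case: gv => gm _ _ _ B mB; rewrite setTI measurable_g_measurableTypeE//; exact: gm.
Qed.

Lemma int_diff E : G E ->
  (\int[P]_(x in E) (g x - \1_C x)%:E = P (A `&` E) - P (C `&` E))%E.
Proof.
move=> GE; have mE := HG GE; have mC := HG GC.
case: gv => _ gi gE.
under eq_integral do rewrite EFinB.
rewrite (@integralB _ _ _ _ _ mE (fun x => (g x)%:E) (fun x => (\1_C x)%:E)) //.
- by rewrite gE // !integral_indic.
- exact: integrableS gi.
- exact: integrableS (integrable_indic P mC).
Qed.

Lemma core_plus (eps : R) : 0 < eps ->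
  (eps%:E * P ((fun x => (g x - \1_C x)%R) @^-1` `[eps, +oo[) <= P (A `\` C))%E.
Proof.
move=> e0; set E := (fun x => g x - \1_C x) @^-1` `[eps, +oo[.
have GE : G E.
  rewrite -(measurable_g_measurableTypeE sG) -[E]setTI.
  have mC' : (G.-sigma).-measurable (C : set (g_sigma_algebraType G)).
    by rewrite measurable_g_measurableTypeE.
  have := (@measurable_funB _ (g_sigma_algebraType G) R setT g (\1_C) subm_G
    (@measurable_indic _ (g_sigma_algebraType G) R setT C mC') measurableT _ (measurable_itv `[eps, +oo[)).
  by rewrite setTI.
have mE := HG GE; have mC := HG GC.
have -> : (eps%:E * P E = \int[P]_(x in E) (cst eps%:E) x)%E by rewrite integral_cst.
apply: (le_trans (y := \int[P]_(x in E) (g x - \1_C x)%:E)%E).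
  apply: ge0_le_integral => //.
  - by move=> x _; rewrite lee_fin ltW.
  - apply/measurable_EFinP; apply: measurable_funB; first exact: measurable_funS subm_T.
    exact: measurable_indic.
  - by move=> x; rewrite /E /= in_itv /= andbT lee_fin.
rewrite int_diff // leeBlDr ?fin_num_measure//; last exact: measurableI.
apply: (le_trans (y := P ((C `&` E) `|` (A `\` C)))).
  apply: le_measure; rewrite ?inE; [exact: measurableI|..].
  - by apply: measurableU; [exact: measurableI|exact: measurableD].
  - by move=> x [Ax Ex]; have [Cx|nCx] := pselect (C x); [left|right].
by rewrite addeC; apply: measureU2; [exact: measurableI|exact: measurableD].
Qed.
Lemma int_diff2 E : G E ->
  (\int[P]_(x in E) (\1_C x - g x)%:E = P (C `&` E) - P (A `&` E))%E.
Proof.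
move=> GE; have mE := HG GE; have mC := HG GC.
case: gv => _ gi gE.
under eq_integral do rewrite EFinB.
rewrite (@integralB _ _ _ _ _ mE (fun x => (\1_C x)%:E) (fun x => (g x)%:E)) //.
- by rewrite gE // !integral_indic.
- exact: integrableS (integrable_indic P mC).
- exact: integrableS gi.
Qed.

Lemma core_minus (eps : R) : 0 < eps ->
  (eps%:E * P ((fun x => (\1_C x - g x)%R) @^-1` `[eps, +oo[) <= P (C `\` A))%E.
Proof.
move=> e0; set E := (fun x => \1_C x - g x) @^-1` `[eps, +oo[.
have GE : G E.
  rewrite -(measurable_g_measurableTypeE sG) -[E]setTI.
  have mC' : (G.-sigma).-measurable (C : set (g_sigma_algebraType G)).
    by rewrite measurable_g_measurableTypeE.
  have := (@measurable_funB _ (g_sigma_algebraType G) R setT (\1_C) g (@measurable_indic _ (g_sigma_algebraType G) R setT C mC')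
    subm_G measurableT _ (measurable_itv `[eps, +oo[)).
  by rewrite setTI.
have mE := HG GE; have mC := HG GC.
have -> : (eps%:E * P E = \int[P]_(x in E) (cst eps%:E) x)%E by rewrite integral_cst.
apply: (le_trans (y := \int[P]_(x in E) (\1_C x - g x)%:E)%E).
  apply: ge0_le_integral => //.
  - by move=> x _; rewrite lee_fin ltW.
  - apply/measurable_EFinP; apply: measurable_funB; last exact: measurable_funS subm_T.
    exact: measurable_indic.
  - by move=> x; rewrite /E /= in_itv /= andbT lee_fin.
rewrite int_diff2 // leeBlDr ?fin_num_measure//; last exact: measurableI.
apply: (le_trans (y := P ((A `&` E) `|` (C `\` A)))).
  apply: le_measure; rewrite ?inE; [exact: measurableI|..].
  - by apply: measurableU; [exact: measurableI|exact: measurableD].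
  - by move=> x [Ax Ex]; have [Cx|nCx] := pselect (A x); [left|right].
by rewrite addeC; apply: measureU2; [exact: measurableI|exact: measurableD].
Qed.

Definition symd (X Y : set T) := (X `\` Y) `|` (Y `\` X).

Lemma meas_level (h : T -> R) (eps : R) : measurable_fun setT h ->
  measurable [set x | eps <= `|h x|].
Proof.
move=> mh.
have -> : [set x | eps <= `|h x|] = (fun x => `|h x|) @^-1` `[eps, +oo[.
  by apply/seteqP; split => x /=; rewrite in_itv /= andbT.
rewrite -[X in measurable X]setTI.
exact: (measurableT_comp (@normr_measurable R setT) mh measurableT (measurable_itv `[eps, +oo[)).
Qed.

Lemma key_bound (eps : R) : 0 < eps ->
  (P [set x | (eps <= `|g x - \1_A x|)%R] <= ((2 + eps) / eps)%:E * P (symd A C))%E.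
Proof.
move=> e0.
set S := [set x | eps <= `|g x - \1_A x|].
set Ep := (fun x => (g x - \1_C x)%R) @^-1` `[eps, +oo[.
set Em := (fun x => (\1_C x - g x)%R) @^-1` `[eps, +oo[.
have hp := core_plus e0; have hm := core_minus e0.
rewrite -/Ep in hp; rewrite -/Em in hm.
have mC := HG GC.
have mS : measurable S.
  apply: meas_level; apply: measurable_funB; first exact: subm_T.
  exact: (@measurable_indic _ T R setT A mA).
have mEp : measurable Ep.
  have := (@measurable_funB _ T R setT g (\1_C) subm_T
    (@measurable_indic _ T R setT C mC) measurableT _ (measurable_itv `[eps, +oo[)).
  by rewrite setTI.
have mEm : measurable Em.
  have := (@measurable_funB _ T R setT (\1_C) g
    (@measurable_indic _ T R setT C mC) subm_T measurableT _ (measurable_itv `[eps, +oo[)).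
  by rewrite setTI.
have mAC : measurable (A `\` C) by exact: measurableD.
have mCA : measurable (C `\` A) by exact: measurableD.
have msy : measurable (symd A C) by exact: measurableU.
have h1 : (P S <= P Ep + P Em + P (symd A C))%E.
  apply: (le_trans (y := P ((Ep `|` Em) `|` symd A C))).
    apply: le_measure; rewrite ?inE //; first by do 2 apply: measurableU.
    move=> x; rewrite /S /= => Sx.
    have [sx|nsx] := pselect (symd A C x); first by right.
    left; have eAC : \1_A x = \1_C x :> R.
      rewrite /indic; have [Ax|nAx] := pselect (A x); have [Cx|nCx] := pselect (C x).
      - by rewrite !mem_set.
      - by exfalso; apply: nsx; left.
      - by exfalso; apply: nsx; right.
      - by rewrite !memNset.
    rewrite eAC in Sx; rewrite /Ep /Em /= !in_itv /= !andbT.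
    move: Sx; have [ge|lt] := lerP 0 (g x - \1_C x) => Sx.
      by left; rewrite -(ger0_norm ge).
    by right; rewrite -opprB -(ltr0_norm lt).
  apply: (le_trans (measureU2 _ _ _)) => //; first by exact: measurableU.
  by apply: leeD => //; apply: measureU2.
have h2 : (P (A `\` C) <= P (symd A C))%E.
  by apply: le_measure; rewrite ?inE //; move=> x Ax; left.
have h3 : (P (C `\` A) <= P (symd A C))%E.
  by apply: le_measure; rewrite ?inE //; move=> x Ax; right.
move: hp hm h1 h2 h3.
rewrite -(fineK (fin_num_measure P S mS)) -(fineK (fin_num_measure P Ep mEp)).
rewrite -(fineK (fin_num_measure P Em mEm)) -(fineK (fin_num_measure P _ mAC)).
rewrite -(fineK (fin_num_measure P _ mCA)) -(fineK (fin_num_measure P _ msy)).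
have := fine_ge0 (measure_ge0 P Ep); have := fine_ge0 (measure_ge0 P Em).
set a := fine (P S); set b := fine (P Ep); set c := fine (P Em).
set u := fine (P (A `\` C)); set v := fine (P (C `\` A)); set w := fine (P (symd A C)).
rewrite -!EFinM -!EFinD !lee_fin => c0 b0 hp hm h1 h2 h3.
rewrite mulrAC ler_pdivlMr //.
nra.
Qed.
End core.

Section dirs.
Context {d : measure_display} {T : measurableType d} {R : realType}.
Variables (P : probability T R) (B : nat -> set (set T))
  (HB : forall n, B n `<=` measurable) (sB : forall n, sigma_algebra setT (B n)).
Variables (A : set T) (mA : measurable A).

Lemma dir2 (C : nat -> set T) (BC : forall n, B n (C n))
  (hC : (fun n => P (symd A (C n))) @ \oo --> 0%E)
  (g : nat -> T -> R) (gv : forall n, cond_exp_version P (B n) (\1_A) (g n)) :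
  cvg_in_prob P g (\1_A).
Proof.
move=> eps e0.
apply: (@squeeze_cvge _ _ _ _ (fun=> 0%E) _
  (fun n => ((2 + eps) / eps)%:E * P (symd A (C n)))%E).
- apply: nearW => n; rewrite measure_ge0 /=.
  exact: (key_bound (@HB n) (sB n) mA (gv n) (BC n) e0).
- exact: cvg_cst.
- rewrite -[X in _ --> X](mule0 ((2 + eps) / eps)%:E).
  exact: cvgeZl.
Qed.

Lemma dir1 (g : nat -> T -> R) (gm : forall n, sub_measurable (B n) (g n))
  (hg : cvg_in_prob P g (\1_A)) :
  (fun n => P (symd A (g n @^-1` `]2^-1, +oo[))) @ \oo --> 0%E.
Proof.
have := hg 2^-1 ltac:(by rewrite invr_gt0).
apply: (@squeeze_cvge _ _ _ _ (fun=> 0%E)); last exact: cvg_cst.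
apply: nearW => n; rewrite measure_ge0 /=.
have mgT : measurable_fun setT (g n).
  by move=> _ Y mY; rewrite setTI; apply: HB; exact: gm.
have mC : measurable (g n @^-1` `]2^-1, +oo[).
  by rewrite -[X in measurable X]setTI; exact: mgT.
apply: le_measure; rewrite ?inE.
- by apply: measurableU; apply: measurableD.
- apply: meas_level; exact: (measurable_funB mgT (@measurable_indic _ T R setT A mA)).
move=> x [[Ax nCx]|[Cx nAx]]; rewrite /= /indic.
- rewrite mem_set //; move: nCx; rewrite /= in_itv /= andbT => /negP; rewrite -leNgt => gx.
  rewrite ler0_norm; last by rewrite subr_le0 (le_trans gx) // invf_le1 // ler1n.
  rewrite opprB; lra.
- rewrite memNset // subr0; move: Cx; rewrite /= in_itv /= andbT => gx.
  by rewrite ltW // (lt_le_trans gx) // ler_norm.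
Qed.
End dirs.

Section ac.
Context {d : measure_display} {T : measurableType d} {R : realType}.
Variables (P Q : probability T R) (PQ : equiv_prob P Q).

Lemma ac_eps (e : R) : 0 < e -> exists2 del : R, 0 < del &
  forall C, measurable C -> (P C < del%:E)%E -> (Q C < e%:E)%E.
Proof.
move=> e0; apply: contrapT => H.
have H' k : exists C, [/\ measurable C, (P C < (1 / (2 ^ k.+1)%:R)%:E)%E & (e%:E <= Q C)%E].
  apply: contrapT => nC; apply: H; exists (1 / (2 ^ k.+1)%:R); first by rewrite divr_gt0.
  move=> C mC PC; rewrite ltNge; apply/negP => QC; apply: nC; by exists C; split.
have [F hF] := choice H'.
have mF k : measurable (F k) by case: (hF k).
have P0 : P (lim_sup_set F) = 0%E.
  apply: lim_sup_set_cvg0 => //.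
  apply: (le_lt_trans (y := 1%:E)); last by rewrite ltry.
  apply: le_trans (epsilon_trick0 xpredT ler01).
  apply: lee_nneseries => // i _; by case: (hF i) => _ /ltW.
have mL : measurable (lim_sup_set F).
  by apply: bigcap_measurable => // k _; exact: bigcup_measurable.
have Q0 : Q (lim_sup_set F) = 0%E by apply/(PQ mL).
have : (e%:E <= Q (lim_sup_set F))%E.
  rewrite -(cvg_lim _ (lim_sup_set_cvg Q F mF _)) //; last first.
    by rewrite ltey_eq fin_num_measure //; exact: bigcup_measurable.
  apply: lime_ge.
    by apply/cvg_ex; eexists; apply: lim_sup_set_cvg => //; rewrite ltey_eq fin_num_measure //; exact: bigcup_measurable.
  apply: nearW => n; case: (hF n) => _ _ /le_trans; apply.
  apply: le_measure; rewrite ?inE //; first exact: bigcup_measurable.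
  by move=> x Fx; exists n => //=.
by rewrite Q0 lee_fin leNgt e0.
Qed.
End ac.

Section main.
Context {d : measure_display} {T : measurableType d} {R : realType}.

Lemma ac_cvg (P Q : probability T R) (PQ : equiv_prob P Q) (D : nat -> set T) :
  (forall n, measurable (D n)) ->
  (fun n => P (D n)) @ \oo --> 0%E -> (fun n => Q (D n)) @ \oo --> 0%E.
Proof.
move=> mD /fine_cvgP [_ hP]; apply/fine_cvgP; split.
  by apply: nearW => n; rewrite fin_num_measure.
apply/cvgr0Pnorm_lt => e e0.
have [del del0 hdel] := ac_eps PQ e0.
move/cvgr0Pnorm_lt : hP => /(_ del del0); apply: filterS => n /=.
rewrite !ger0_norm ?fine_ge0 ?measure_ge0 // => h.
have : (Q (D n) < e%:E)%E.
  apply: hdel => //; by rewrite -(fineK (fin_num_measure P _ (mD n))) lte_fin.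
by rewrite -(fineK (fin_num_measure Q _ (mD n))) lte_fin.
Qed.

Lemma half (P Q : probability T R) (B : nat -> set (set T)) :
  equiv_prob P Q ->
  (forall n, B n `<=` measurable) -> (forall n, sigma_algebra setT (B n)) ->
  weak_cvg_sf P B -> weak_cvg_sf Q B.
Proof.
move=> PQ HB sa wP A BA g gv.
have mA : measurable A := HB 0%N _ BA.
have [h hv] := choice (fun n => version_exists P (HB n) mA (sa n)).
have hm n : sub_measurable (B n) (h n) by case: (hv n).
have := dir1 HB mA hm (wP A BA h hv).
set C := fun n => h n @^-1` `]2^-1, +oo[ => hP.
have BC n : B n (C n) by apply: hm; exact: measurable_itv.
have mC n : measurable (symd A (C n)).
  by apply: measurableU; apply: measurableD => //; apply: HB; exact: BC.
exact: (dir2 HB sa mA BC (ac_cvg PQ mC hP) gv).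
Qed.
End main.

Unset Implicit Arguments.
Theorem proposition4p3 (d : measure_display) (T : measurableType d)
  (R : realType) (P Q : probability T R) (B : nat -> set (set T)) :
  equiv_prob P Q ->
  (forall n, sigma_subfield P (B n)) ->
  (weak_cvg_sf P B <-> weak_cvg_sf Q B).
Proof.
move=> PQ sB.
have HB n : B n `<=` measurable by case: (sB n).
have sa n : sigma_algebra setT (B n) by case: (sB n).
split; apply: half => //.
by move=> F mF; apply: iff_sym; exact: PQ.
Qed.
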